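(* Let $n\ge1$ and let $\mathrm{adj}\colon K\dashv N$ be the adjunction between $\mathrm{s}^n\mathcal S$ and $\mathbf{Rel}^n\mathbf{Cat}$. (i) For every $X\in\mathrm{s}^n\mathcal S$, the $n$-relative category $KX$ is completely determined by the $2$-skeleton $\mathrm{sk}_2X$ of $X$; that is, the inclusion $\mathrm{sk}_2X\to X$ induces an isomorphism $K(\mathrm{sk}_2X)\to KX$. (ii) For every $\mathcal C\in\mathbf{Rel}^n\mathbf{Cat}$, $N\mathcal C$ is completely determined by its $2$-skeleton and is its own $2$-coskeleton: for every $Y\in\mathrm{s}^n\mathcal S$, restriction gives a bijection between maps $Y\to N\mathcal C$ and maps $\mathrm{sk}_2Y\to\mathrm{sk}_2N\mathcal C$.
   Context: An $n$-relative category $\mathcal C=(a\mathcal C,v_1\mathcal C,\dots,v_n\mathcal C,w\mathcal C)$ consists of a category $a\mathcal C$ and subcategories $v_1\mathcal C,\dots,v_n\mathcal C,w\mathcal C\subset a\mathcal C$, each containing all objects, with $w\mathcal C\subset v_i\mathcal C$, such that every map of $a\mathcal C$ is a finite composite of maps in the $v_i\mathcal C$, and every relation in $a\mathcal C$ follows from commutativity of squares $y_2x_1=x_2y_1$ with $x_1,x_2\in v_i\mathcal C$, $y_1,y_2\in v_j\mathcal C$. $\mathbf{Rel}^n\mathbf{Cat}$ is the category of small $n$-relative categories and functors of ambient categories preserving $w$ and each $v_i$. For $p\ge0$, $\mathbf p$ is the poset $0\to\cdots\to p$ and $|\mathbf p|$ its discrete subcategory; $\mathbf p_n^{v_n}\times\cdots\times\mathbf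 p_1^{v_1}\times\mathbf q^w$ is the $n$-relative category with ambient category $\mathbf p_n\times\cdots\times\mathbf p_1\times\mathbf q$, $w=|\mathbf p_n|\times\cdots\times|\mathbf p_1|\times\mathbf q$, $v_i=|\mathbf p_n|\times\cdots\times\mathbf p_i\times\cdots\times|\mathbf p_1|\times\mathbf q$. $\mathrm{s}^n\mathcal S$ is the category of $(n+1)$-simplicial sets with multisimplices indexed by $(p_n,\dots,p_1,q)$; $\Delta[p_n,\dots,p_1,q]$ is the standard (representable) multisimplex. $N\mathcal C$ has as $(p_n,\dots,p_1,q)$-simplices the relative functors $\mathbf p_n^{v_n}\times\cdots\times\mathbf p_1^{v_1}\times\mathbf q^w\to\mathcal C$, and $K$ is its left adjoint, the colimit-preserving functor with $K\Delta[p_n,\dots,p_1,q]=\mathbf p_n^{v_n}\times\cdots\times\mathbf p_1^{v_1}\times\mathbf q^w$. A multisimplex of degree $(p_n,\dots,p_1,q)$ has total dimension $p_n+\cdots+p_1+q$; the $2$-skeleton $\mathrm{sk}_2X$ of $X$ is the smallest subobject of $X$ containing all multisimplices of total dimension $\le2$. *)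

(* Defs.v *)
From mathcomp Require Import all_boot.
Set Implicit Arguments. Unset Strict Implicit. Unset Printing Implicit Defensive.

Section Defs.
Variable n : nat.

(* comp g f is g o f; it is only meaningful when cod f = dom g.         *)
(* rv i is the subcategory v_{i+1}, rw is w.                           *)
Record prerelcat := PreRelCat {
  ob : Type; mor : Type;
  dom : mor -> ob; cod : mor -> ob;
  idm : ob -> mor;
  comp : mor -> mor -> mor;
  rv : 'I_n -> mor -> Prop;
  rw : mor -> Prop }.

Definition is_cat (C : prerelcat) : Prop :=
  (forall a : ob C, dom (idm a) = a /\ cod (idm a) = a) /\
  (forall f g : mor C, cod f = dom g ->
      dom (comp g f) = dom f /\ cod (comp g f) = cod g) /\
  (forall f : mor C, comp f (idm (dom f)) = f /\ comp (idm (cod f)) f = f) /\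
  (forall f g h : mor C, cod f = dom g -> cod g = dom h ->
      comp h (comp g f) = comp (comp h g) f).

Definition is_subcat (C : prerelcat) (P : mor C -> Prop) : Prop :=
  (forall a : ob C, P (idm a)) /\
  (forall f g : mor C, cod f = dom g -> P f -> P g -> P (comp g f)).

Fixpoint chain (C : prerelcat) (a : ob C) (s : seq ('I_n * mor C)) : Prop :=
  match s with
  | [::] => True
  | (i, f) :: s' => dom f = a /\ rv i f /\ chain (cod f) s'
  end.

Fixpoint pend (C : prerelcat) (a : ob C) (s : seq ('I_n * mor C)) : ob C :=
  match s with [::] => a | (_, f) :: s' => pend (cod f) s' end.

Fixpoint peval (C : prerelcat) (a : ob C) (s : seq ('I_n * mor C)) : mor C :=
  match s with [::] => idm a | (_, f) :: s' => comp (peval (cod f) s') f end.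

(* elementary relations: commutative squares y2 x1 = x2 y1 with
   x1, x2 in v_i and y1, y2 in v_j, and identities of the v_i *)
Definition sq_step (C : prerelcat) (P Q : ob C * seq ('I_n * mor C)) : Prop :=
  P.1 = Q.1 /\ chain P.1 P.2 /\ chain Q.1 Q.2 /\
  ((exists s1 s2 (i j : 'I_n) (x1 x2 y1 y2 : mor C),
       P.2 = s1 ++ [:: (i, x1); (j, y2)] ++ s2 /\
       Q.2 = s1 ++ [:: (j, y1); (i, x2)] ++ s2 /\
       dom x1 = dom y1 /\ cod y2 = cod x2 /\ comp y2 x1 = comp x2 y1)
   \/ (exists s1 s2 (i : 'I_n) (b : ob C),
       P.2 = s1 ++ (i, idm b) :: s2 /\ Q.2 = s1 ++ s2)).

Inductive eqclos (T : Type) (R : T -> T -> Prop) : T -> T -> Prop :=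
  | ec_step x y : R x y -> eqclos R x y
  | ec_refl x : eqclos R x x
  | ec_sym x y : eqclos R x y -> eqclos R y x
  | ec_trans x y z : eqclos R x y -> eqclos R y z -> eqclos R x z.

Definition is_relcat (C : prerelcat) : Prop :=
  is_cat C /\
  (forall i, is_subcat (fun f : mor C => rv i f)) /\ is_subcat (fun f : mor C => rw f) /\
  (forall i (f : mor C), rw f -> rv i f) /\
  (* every map is a finite composite of maps in the v_i *)
  (forall f : mor C, exists s, chain (dom f) s /\ pend (dom f) s = cod f /\
                               peval (dom f) s = f) /\
  (* every relation follows from commutative squares *)
  (forall (a : ob C) s t, chain a s -> chain a t -> pend a s = pend a t ->
      peval a s = peval a t -> eqclos (@sq_step C) (a, s) (a, t)).

Record rfun (C D : prerelcat) := RFun {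
  fo : ob C -> ob D;
  fm : mor C -> mor D;
  fm_dom : forall f, dom (fm f) = fo (dom f);
  fm_cod : forall f, cod (fm f) = fo (cod f);
  fm_id : forall a, fm (idm a) = idm (fo a);
  fm_comp : forall f g, cod f = dom g -> fm (comp g f) = comp (fm g) (fm f);
  fm_v : forall i f, rv i f -> rv i (fm f);
  fm_w : forall f, rw f -> rw (fm f) }.

Definition rfeq (C D : prerelcat) (F G : rfun C D) : Prop :=
  (forall a, fo F a = fo G a) /\ (forall f, fm F f = fm G f).

Program Definition rcomp (C D E : prerelcat) (F : rfun D E) (G : rfun C D)
  : rfun C E := @RFun C E (fun a => fo F (fo G a)) (fun f => fm F (fm G f))
    _ _ _ _ _ _.
Next Obligation. by move=> *; rewrite /= !fm_dom. Qed.
Next Obligation. by move=> *; rewrite /= !fm_cod. Qed.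
Next Obligation. by move=> *; rewrite /= !fm_id. Qed.
Next Obligation.
by move=> C D E F G f g H /=; rewrite !fm_comp // fm_cod fm_dom H.
Qed.
Next Obligation. by move=> *; apply: fm_v; apply: fm_v. Qed.
Next Obligation. by move=> *; apply: fm_w; apply: fm_w. Qed.

Program Definition rid (C : prerelcat) : rfun C C :=
  @RFun C C id id _ _ _ _ _ _.
Solve All Obligations with done.

Definition is_iso (C D : prerelcat) (F : rfun C D) : Prop :=
  exists G : rfun D C, rfeq (rcomp G F) (rid C) /\ rfeq (rcomp F G) (rid D).

(* Multi-indices (q, p_1, ..., p_n): coordinate 0 is q (the w-direction), *)
(* coordinate i+1 (= lift ord0 i) is p_{i+1} (the v_{i+1}-direction).   *)
Definition idx := 'I_n.+1 -> nat.
Definition tdim (p : idx) : nat := \sum_(k < n.+1) p k.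

(* maps [q] -> [p] of Delta^{n+1}: coordinatewise monotone maps *)
Unset Implicit Arguments.
Record mmono (q p : idx) := MMono {
  mm : forall k, 'I_(q k).+1 -> 'I_(p k).+1;
  mm_homo : forall k (x y : 'I_(q k).+1), x <= y -> mm k x <= mm k y }.
Arguments mm {q p}.
Arguments mm_homo {q p}.
Arguments MMono {q p}.
Set Implicit Arguments.

Definition mm_id (p : idx) : mmono p p := MMono (fun k x => x) (fun k x y h => h).
Program Definition mm_comp (r q p : idx) (f : mmono q p) (g : mmono r q)
  : mmono r p := MMono (fun k x => mm f k (mm g k x)) _.
Next Obligation. by move=> r q p f g k x y h; do 2 apply: mm_homo. Qed.

(* (n+1)-simplicial sets: presheaves on Delta^{n+1}; laws separately *)
Record pmss := PMSS {
  elt :> idx -> Type;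
  act : forall (p q : idx), mmono q p -> elt p -> elt q }.

Definition is_mss (X : pmss) : Prop :=
  (forall p (x : X p), act (mm_id p) x = x) /\
  (forall p q r (f : mmono q p) (g : mmono r q) (x : X p),
      act (mm_comp f g) x = act g (act f x)).

Definition spred (X : pmss) := forall p, X p -> Prop.
Definition allp (X : pmss) : spred X := fun _ _ => True.
Definition sk2 (X : pmss) : spred X := fun p x =>
  exists (q : idx) (f : mmono p q) (y : X q), tdim q <= 2 /\ x = act f y.
Arguments allp X : clear implicits.
Arguments sk2 X : clear implicits.

Record smap (X : pmss) (S : spred X) (Z : pmss) (T : spred Z) := SMap {
  sfun : forall p (x : X p), S p x -> Z p;
  sfun_in : forall p (x : X p) (hx : S p x), T p (sfun hx);
  sfun_nat : forall p q (f : mmono q p) (x : X p) (hx : S p x)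
      (hx' : S q (act f x)), sfun hx' = act f (sfun hx) }.

Program Definition restr (X Z : pmss) (g : smap (allp X) (allp Z))
  : smap (sk2 X) (sk2 Z) :=
  @SMap X (sk2 X) Z (sk2 Z) (fun p x _ => sfun g (I : allp X _ x)) _ _.
Next Obligation.
move=> X Z g p x [q [f [y [hq e]]]]; subst x => /=.
exists q, f, (sfun g (I : allp X _ y)); split=> //.
exact: (@sfun_nat _ _ _ _ g q p f y I I).
Qed.
Next Obligation. by move=> X Z g p q f x hx hx' /=; exact: (@sfun_nat _ _ _ _ g p q f x I I). Qed.

Program Definition restr_dom (X Z : pmss) (T : spred Z) (g : smap (allp X) T)
  : smap (sk2 X) T :=
  @SMap X (sk2 X) Z T (fun p x _ => sfun g (I : allp X _ x)) _ _.
Next Obligation. by move=> X Z T g p x hx; exact: sfun_in. Qed.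
Next Obligation. by move=> X Z T g p q f x hx hx' /=; exact: (@sfun_nat _ _ _ _ g p q f x I I). Qed.

(* the grid  p_n^{v_n} x ... x p_1^{v_1} x q^w                          *)
Section Grid.
Variable p : idx.
Definition gob := forall k : 'I_n.+1, 'I_(p k).+1.
Definition gle (a b : gob) : bool := [forall k, a k <= b k].
Definition gmor := {ab : gob * gob | gle ab.1 ab.2}.
Definition gdom (m : gmor) : gob := (sval m).1.
Definition gcod (m : gmor) : gob := (sval m).2.
Lemma gle_refl a : gle a a. Proof. by apply/forallP. Qed.
Definition gid (a : gob) : gmor := exist _ (a, a) (gle_refl a).
Definition gcomp (g f : gmor) : gmor := insubd f (gdom f, gcod g).
Definition gv (i : 'I_n) (m : gmor) : Prop :=
  forall k, k != ord0 -> k != lift ord0 i -> (gdom m k : nat) = gcod m k.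
Definition gw (m : gmor) : Prop :=
  forall k, k != ord0 -> (gdom m k : nat) = gcod m k.
Definition grid : prerelcat := @PreRelCat gob gmor gdom gcod gid gcomp gv gw.

Lemma gm_eq (m1 m2 : gmor) : sval m1 = sval m2 -> m1 = m2.
Proof.
case: m1 m2 => x hx [y hy] /= e; subst y.
by rewrite (bool_irrelevance hx hy).
Qed.

Lemma gcomp_val (f g : gmor) : gcod f = gdom g ->
  sval (gcomp g f) = (gdom f, gcod g).
Proof.
move=> e; rewrite /gcomp insubdK //.
move: e; case: f => [[a b] hab]; case: g => [[c d] hcd].
rewrite /gcod /gdom /= => e; subst c.
apply/forallP => k; move/forallP: hab => /(_ k) hab.
move/forallP: hcd => /(_ k) hcd; exact: leq_trans hab hcd.
Qed.
End Grid.

Section GridFun.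
Variables (q p : idx) (f : mmono q p).
Definition gfo (a : gob q) : gob p := fun k => mm f k (a k).
Lemma gfo_le (a b : gob q) : gle a b -> gle (gfo a) (gfo b).
Proof. by move=> /forallP h; apply/forallP => k; apply: mm_homo. Qed.
Definition gfm (m : gmor q) : gmor p :=
  exist _ (gfo (gdom m), gfo (gcod m)) (gfo_le (svalP m)).

Program Definition gridfun : rfun (grid q) (grid p) :=
  @RFun (grid q) (grid p) gfo gfm _ _ _ _ _ _.
Next Obligation. by []. Qed.
Next Obligation. by []. Qed.
Next Obligation. by move=> a; apply: gm_eq. Qed.
Next Obligation.
move=> f1 g1 H; apply: gm_eq.
have H' : gcod (gfm f1) = gdom (gfm g1) by rewrite /gcod /gdom /=; congr gfo; exact: H.
change (sval (gfm (gcomp g1 f1)) = sval (gcomp (gfm g1) (gfm f1))).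
rewrite (gcomp_val H') /= /gdom /gcod (gcomp_val H) //.
Qed.
Next Obligation.
move=> i m H k hk hk'; rewrite /gfo /=; congr (nat_of_ord (mm f k _)).
by apply: val_inj; apply: H.
Qed.
Next Obligation.
move=> m H k hk; rewrite /gfo /=; congr (nat_of_ord (mm f k _)).
by apply: val_inj; apply: H.
Qed.
End GridFun.

Definition nerve (C : prerelcat) : pmss :=
  @PMSS (fun p => rfun (grid p) C)
        (fun p q f F => rcomp F (gridfun f)).

(* universal arrows: (D, eta : S -> N D) is a value of the left adjoint K
   at the subobject S of X (S = all of X, or S = sk_2 X) *)
Definition factors (X : pmss) (S : spred X) (D C : prerelcat)
  (phi : rfun D C) (eta : smap S (allp (nerve D)))
  (g : smap S (allp (nerve C))) : Prop :=
  forall p (x : X p) (hx : S p x), rfeq (rcomp phi (sfun eta hx)) (sfun g hx).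

Definition universal (X : pmss) (S : spred X) (D : prerelcat)
  (eta : smap S (allp (nerve D))) : Prop :=
  forall C : prerelcat, is_relcat C -> forall g : smap S (allp (nerve C)),
    (exists phi : rfun D C, factors phi eta g) /\
    (forall phi1 phi2 : rfun D C, factors phi1 eta g -> factors phi2 eta g ->
       rfeq phi1 phi2).

End Defs.

Arguments allp {n} X.
Arguments sk2 {n} X.

(* Main.v *)
Require Import Defs.
From mathcomp Require Import all_boot.
From Stdlib Require Import FunctionalExtensionality ProofIrrelevance.
From mathcomp Require Import zify.
From Stdlib Require Import Lia.
Set Implicit Arguments. Unset Strict Implicit. Unset Printing Implicit Defensive.

Arguments mm {n q p}.
Arguments MMono {n q p}.
Arguments mm_homo {n q p}.

Section Work.
Variable n : nat.
Local Notation N := n.+1.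
Local Notation idx := (idx n).
Implicit Types (p q r : idx).

Lemma mmono_ext q p (f g : mmono n q p) :
  (forall k x, mm f k x = mm g k x) -> f = g.
Proof.
case: f g => f hf [g hg] /= e.
have E : f = g.
  apply: functional_extensionality_dep => k; apply: functional_extensionality => x; exact: e.
subst g; congr MMono; apply: proof_irrelevance.
Qed.

Lemma rfeq_eq (C D : prerelcat n) (F G : rfun C D) : rfeq F G -> F = G.
Proof.
case: F G => fo1 fm1 a1 b1 c1 d1 e1 f1 [fo2 fm2 a2 b2 c2 d2 e2 f2] [/= h1 h2].
have E1 : fo1 = fo2 by apply: functional_extensionality.
have E2 : fm1 = fm2 by apply: functional_extensionality.
subst; f_equal; apply: proof_irrelevance.
Qed.

Lemma smap_eq (X : pmss n) (S : spred X) (Z : pmss n) (T : spred Z)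
  (g1 g2 : smap S T) :
  (forall p x (hx : S p x), sfun g1 hx = sfun g2 hx) -> g1 = g2.
Proof.
case: g1 g2 => s1 i1 n1 [s2 i2 n2] /= e.
have E : s1 = s2.
  apply: functional_extensionality_dep => p; apply: functional_extensionality_dep => x.
  apply: functional_extensionality_dep => hx; exact: e.
subst; f_equal; apply: proof_irrelevance.
Qed.

Lemma rfeq_refl (C D : prerelcat n) (F : rfun C D) : rfeq F F.
Proof. by []. Qed.
Lemma rfeq_sym (C D : prerelcat n) (F G : rfun C D) : rfeq F G -> rfeq G F.
Proof. by case=> h1 h2; split=> x; [rewrite h1|rewrite h2]. Qed.
Lemma rfeq_trans (C D : prerelcat n) (F G H : rfun C D) :
  rfeq F G -> rfeq G H -> rfeq F H.
Proof. by case=> h1 h2 [h3 h4]; split=> x; [rewrite h1 h3|rewrite h2 h4]. Qed.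
Lemma rfeq_compl (C D E : prerelcat n) (F : rfun D E) (G H : rfun C D) :
  rfeq G H -> rfeq (rcomp F G) (rcomp F H).
Proof. by case=> h1 h2; split=> x /=; rewrite ?h1 ?h2. Qed.
Lemma rfeq_compr (C D E : prerelcat n) (F G : rfun D E) (H : rfun C D) :
  rfeq F G -> rfeq (rcomp F H) (rcomp G H).
Proof. by case=> h1 h2; split=> x /=; rewrite ?h1 ?h2. Qed.
Lemma rcompA (C D E B : prerelcat n) (F : rfun E B) (G : rfun D E) (H : rfun C D) :
  rfeq (rcomp (rcomp F G) H) (rcomp F (rcomp G H)).
Proof. by []. Qed.

Lemma gob_ext p (u v : gob p) : (forall l, (u l : nat) = v l) -> u = v.
Proof.
move=> e; apply: functional_extensionality_dep => l; apply: val_inj; exact: e.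
Qed.

Definition omax m (x y : 'I_m) := if x <= y then y else x.
Lemma omax_r m (x y : 'I_m) : x <= y -> omax x y = y.
Proof. by rewrite /omax => ->. Qed.
Lemma omax_ge m (x y : 'I_m) : x <= omax x y.
Proof. by rewrite /omax; case: ifP. Qed.
Lemma omax_val m (x y : 'I_m) : (omax x y : nat) = maxn x y.
Proof.
rewrite /omax; case: ifP => h; first by rewrite (maxn_idPr h).
by rewrite (maxn_idPl _) // ltnW // ltnNge h.
Qed.
Lemma omax_le m (x y x' y' : 'I_m) : x <= x' -> y <= y' -> omax x y <= omax x' y'.
Proof. by rewrite !omax_val => a b; rewrite geq_max !leq_max a b orbT. Qed.

Definition tpf p (u v : gob p) k (x : nat) : 'I_(p k).+1 :=
  if x == 0 then u k else omax (u k) (v k).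
Lemma tpf_homo p (u v : gob p) k (x y : nat) : x <= y -> tpf u v k x <= tpf u v k y.
Proof.
rewrite /tpf; case: eqP => [_|hx] h; first by case: eqP => _ //; exact: omax_ge.
by case: eqP => [hy|_]; [move: h; rewrite hy leqn0 => /eqP|].
Qed.
Definition tp q p (u v : gob p) : mmono n q p :=
  MMono (fun k (x : 'I_(q k).+1) => tpf u v k x) (fun k x y h => tpf_homo u v k h).

Definition bot q : gob q := fun l => ord0.
Definition top q : gob q := fun l => ord_max.
Lemma bot_top q : gle (bot q) (top q).
Proof. by apply/forallP. Qed.
Definition topm q : gmor q := exist _ (bot q, top q) (bot_top q).

Definition mk p (u v : gob p) : gmor p := insubd (gid u) (u, v).
Lemma mk_val p (u v : gob p) : gle u v -> sval (mk u v) = (u, v).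
Proof. by move=> h; rewrite /mk insubdK. Qed.
Lemma mkE p (m : gmor p) : m = mk (gdom m) (gcod m).
Proof.
apply: gm_eq; rewrite mk_val; first by case: m => [[a b] h].
by case: m => [[a b] h].
Qed.

Lemma gle_trans p (a b c : gob p) : gle a b -> gle b c -> gle a c.
Proof.
move=> /forallP h1 /forallP h2; apply/forallP => k; exact: leq_trans (h1 k) (h2 k).
Qed.
Lemma gleP p (a b : gob p) : reflect (forall k, a k <= b k) (gle a b).
Proof. exact: forallP. Qed.

Lemma mk_comp p (a b c : gob p) : gle a b -> gle b c ->
  gcomp (mk b c) (mk a b) = mk a c.
Proof.
move=> h1 h2; apply: gm_eq.
rewrite gcomp_val /gdom /gcod ?mk_val //; exact: gle_trans h1 h2.
Qed.

Lemma gfo_tp q p (u v : gob p) (c : gob q) l :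
  gfo (tp q u v) c l = tpf u v l (c l).
Proof. by []. Qed.

Definition mid p (a b : gob p) (j : nat) : gob p :=
  fun l => if l < j then b l else a l.
Definition step p (j : nat) (u v : gob p) : Prop :=
  gle u v /\ forall l : 'I_N, (l : nat) != j -> u l = v l.

Lemma mid0 p (a b : gob p) : mid a b 0 = a.
Proof. by apply: functional_extensionality_dep. Qed.
Lemma midN p (a b : gob p) : mid a b N = b.
Proof. by apply: functional_extensionality_dep => l; rewrite /mid ltn_ord. Qed.
Lemma mid_le p (a b : gob p) j : gle a b -> gle a (mid a b j).
Proof. by move/gleP=> h; apply/gleP => l; rewrite /mid; case: ifP. Qed.
Lemma mid_ge p (a b : gob p) j : gle a b -> gle (mid a b j) b.
Proof. by move/gleP=> h; apply/gleP => l; rewrite /mid; case: ifP. Qed.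
Lemma mid_step p (a b : gob p) j : gle a b -> step j (mid a b j) (mid a b j.+1).
Proof.
move/gleP=> h; split.
  apply/gleP => l; rewrite /mid; case: ifP => h1; first by rewrite ltnS (ltnW h1).
  by case: ifP.
move=> l hl; have e : (l < j.+1) = (l < j) by rewrite ltnS leq_eqVlt (negbTE hl).
by rewrite /mid e.
Qed.
Lemma step_gle p j (u v : gob p) : step j u v -> gle u v.
Proof. by case. Qed.
Lemma mid_gle p (a b : gob p) j : gle a b -> gle (mid a b j) (mid a b j.+1).
Proof. by move=> h; apply: step_gle (mid_step j h). Qed.

Fixpoint Gen (C : prerelcat n) p (O : gob p -> ob C)
  (S : nat -> gob p -> gob p -> mor C) (a b : gob p) (j : nat) : mor C :=
  match j with
  | 0 => idm (O a)
  | j'.+1 => Defs.comp (S j' (mid a b j') (mid a b j'.+1)) (Gen O S a b j')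
  end.

Lemma GenS (C : prerelcat n) p (O : gob p -> ob C) S (a b : gob p) j :
  Gen O S a b j.+1 = Defs.comp (S j (mid a b j) (mid a b j.+1)) (Gen O S a b j).
Proof. by []. Qed.

Lemma tp_comp r q p (f : mmono n q p) (u v : gob q) : gle u v ->
  mm_comp f (tp r u v) = tp r (gfo f u) (gfo f v).
Proof.
move/gleP=> h; apply: mmono_ext => k x /=; rewrite /tpf; case: eqP => // _.
rewrite !omax_r //; exact: mm_homo.
Qed.

Definition z0 : idx := fun _ => 0.
Definition ek (j : nat) : idx := fun l => ((l : nat) == j : nat).
Definition e2 (j k : nat) : idx := fun l => ((l : nat) == j : nat) + ((l : nat) == k : nat).

Lemma sum_eq1 j : \sum_(l < N) ((l : nat) == j : nat) <= 1.
Proof.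
rewrite (eq_bigr (fun l : 'I_N => if (l : nat) == j then 1 else 0)); last by move=> l _; case: eqP.
by rewrite -big_mkcond (big_ord1_eq _ (fun _ => 1)); case: ifP.
Qed.
Lemma hz0 : tdim z0 <= 2.
Proof. by rewrite /tdim big1. Qed.
Lemma hek j : tdim (ek j) <= 2.
Proof. by rewrite /tdim; apply: leq_trans (sum_eq1 j) _. Qed.
Lemma he2 j k : tdim (e2 j k) <= 2.
Proof. by rewrite /tdim /e2 big_split /=; exact: (leq_add (sum_eq1 j) (sum_eq1 k)). Qed.

Lemma gfo_bot q p (u v : gob p) : gfo (tp q u v) (bot q) = u.
Proof. by apply: gob_ext. Qed.
Lemma gfo_top_step p j (u v : gob p) : step j u v -> gfo (tp (ek j) u v) (top (ek j)) = v.
Proof.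
case=> /gleP h1 h2; apply: gob_ext => l; rewrite gfo_tp /tpf /=.
rewrite /top /ek /=; case: (eqVneq (l : nat) j) => [e|ne] /=.
  by rewrite omax_r.
by rewrite h2.
Qed.

Lemma gdom_mk p (u v : gob p) : gle u v -> gdom (mk u v) = u.
Proof. by move=> h; rewrite /gdom mk_val. Qed.
Lemma gcod_mk p (u v : gob p) : gle u v -> gcod (mk u v) = v.
Proof. by move=> h; rewrite /gcod mk_val. Qed.

Lemma step_mor q (j : nat) (u v : gob q) :
  step j u v -> mk u v = gfm (tp (ek j) u v) (topm (ek j)).
Proof.
move=> st; apply: gm_eq; rewrite mk_val; last exact: step_gle st.
by rewrite /= gfo_bot gfo_top_step.
Qed.

Definition ptv q (c : 'I_N -> nat) : gob q := fun l => inord (c l).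
Lemma ptv_val q c l : c l <= q l -> (ptv q c l : nat) = c l.
Proof. by move=> h; rewrite /ptv inordK // ltnS. Qed.

Lemma fm_mk_comp r (D : prerelcat n) (F : rfun (grid r) D) (a b c : gob r) : gle a b -> gle b c ->
  fm F (mk a c) = Defs.comp (fm F (mk b c)) (fm F (mk a b)).
Proof.
move=> h1 h2; rewrite -(mk_comp h1 h2) fm_comp //.
by change (gcod (mk a b) = gdom (mk b c)); rewrite gcod_mk ?gdom_mk.
Qed.

Lemma Decomp (D : prerelcat n) q (F : rfun (grid q) D) (a b : gob q) : gle a b ->
  fm F (mk a b) = Gen (fo F) (fun j u v => fm F (mk u v)) a b N.
Proof.
move=> hab.
suff H : forall j, fm F (mk a (mid a b j)) = Gen (fo F) (fun j u v => fm F (mk u v)) a b j.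
  by rewrite -H midN.
elim=> [|j IH].
  rewrite mid0; have -> : mk a a = gid a by apply: gm_eq; rewrite mk_val ?gle_refl.
  exact: fm_id.
rewrite GenS -IH; apply: fm_mk_comp; [exact: mid_le | exact: mid_gle].
Qed.

Lemma Gen_ext (D : prerelcat n) q (O1 O2 : gob q -> ob D) S1 S2 (a b : gob q) :
  O1 a = O2 a -> (forall j, S1 j (mid a b j) (mid a b j.+1) = S2 j (mid a b j) (mid a b j.+1)) ->
  forall j, Gen O1 S1 a b j = Gen O2 S2 a b j.
Proof. by move=> h1 h2; elim=> [|j IH] /=; rewrite ?h1 // IH h2. Qed.

Lemma gfo_mid q p (f : mmono n q p) (a b : gob q) j :
  gfo f (mid a b j) = mid (gfo f a) (gfo f b) j.
Proof. by apply: functional_extensionality_dep => l; rewrite /gfo /mid; case: ifP. Qed.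

Section Glue.
Variables (C : prerelcat n) (hC : is_relcat C) (p : idx).
Variable Phi : forall {r : idx}, mmono n r p -> tdim r <= 2 -> rfun (grid r) C.
Hypothesis Hnat : forall r r' (f : mmono n r p) (g : mmono n r' r) hr hr',
  rfeq (Phi (mm_comp f g) hr') (rcomp (Phi f hr) (gridfun g)).

Definition O (a : gob p) : ob C := fo (Phi (tp z0 a a) hz0) (bot z0).
Definition E j (u v : gob p) : mor C :=
  fm (Phi (tp (ek j) u v) (hek j)) (topm (ek j)).

Lemma Ofo r (f : mmono n r p) hr c : fo (Phi f hr) c = O (gfo f c).
Proof.
have := (Hnat f (tp z0 c c) hr hz0).1 (bot z0).
by rewrite tp_comp ?gle_refl //= gfo_bot => <-.
Qed.

Lemma Efm r (f : mmono n r p) hr j (m : gmor r) : step j (gdom m) (gcod m) ->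
  fm (Phi f hr) m = E j (gfo f (gdom m)) (gfo f (gcod m)).
Proof.
move=> st; rewrite {1}(mkE m) (step_mor st).
have := (Hnat f (tp (ek j) (gdom m) (gcod m)) hr (hek j)).2 (topm (ek j)).
by rewrite tp_comp ?(step_gle st) //= => <-.
Qed.

Lemma Efm_mk r (f : mmono n r p) hr j (a b : gob r) : step j a b ->
  fm (Phi f hr) (mk a b) = E j (gfo f a) (gfo f b).
Proof.
move=> st; have h := step_gle st.
have st' : step j (gdom (mk a b)) (gcod (mk a b)) by rewrite gdom_mk ?gcod_mk.
by rewrite (Efm f hr st') gdom_mk ?gcod_mk.
Qed.

Lemma P0 j u : E j u u = idm (O u).
Proof.
have st : step j (bot z0) (bot z0) by split; [exact: gle_refl|].
have := Efm (tp z0 u u) hz0 (m := gid (bot z0)) st.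
rewrite /= gfo_bot => <-; apply: fm_id.
Qed.

Lemma Pdom j u v : dom (E j u v) = O u.
Proof. by rewrite /E fm_dom Ofo /= gfo_bot. Qed.

Lemma Pcod j u v : step j u v -> cod (E j u v) = O v.
Proof. by move=> st; rewrite /E fm_cod Ofo /= gfo_top_step. Qed.

Lemma P3 j u v w : step j u v -> step j v w ->
  Defs.comp (E j v w) (E j u v) = E j u w.
Proof.
move=> s1 s2; have /gleP h1 := step_gle s1; have /gleP h2 := step_gle s2.
pose g l (x : nat) : 'I_(p l).+1 := if x == 0 then u l else if x == 1 then v l else w l.
have gh : forall l (x y : nat), x <= y -> g l x <= g l y.
  move=> l x y; rewrite /g; case: x => [|[|x]]; case: y => [|[|y]] //= _;
  by rewrite ?leqnn ?h1 ?h2 // (leq_trans (h1 l) (h2 l)).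
pose f := MMono (fun l (x : 'I_(e2 j j l).+1) => g l x) (fun l x y hxy => gh l x y hxy).
pose P x := ptv (e2 j j) (fun l => if (l : nat) == j then x else 0).
have Pv : forall x l, x <= 2 -> (P x l : nat) = if (l : nat) == j then x else 0.
  move=> x l hx; rewrite ptv_val //; rewrite /e2; case: eqP => //.
have fP : forall x, x <= 2 -> gfo f (P x) = if x == 0 then u else if x == 1 then v else w.
  move=> x hx; apply: gob_ext => l; rewrite /gfo /= Pv // /g.
  case: (eqVneq (l : nat) j) => [_|ne] /=; first by case: x hx => [|[|[|x]]].
  case: x hx => [|[|x]] //= _; first by rewrite (s1.2 l ne).
  by rewrite (s1.2 l ne) (s2.2 l ne).
have sP : forall x y, x <= y <= 2 -> step j (P x) (P y).
  move=> x y /andP [hxy hy]; have hx := leq_trans hxy hy; split.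
    by apply/gleP => l; rewrite !Pv //; case: ifP.
  by move=> l hl; apply: val_inj; rewrite /= !Pv // (negbTE hl).
have e01 := Efm_mk f (he2 j j) (sP 0 1 erefl).
have e12 := Efm_mk f (he2 j j) (sP 1 2 erefl).
have e02 := Efm_mk f (he2 j j) (sP 0 2 erefl).
rewrite !fP // in e01 e12 e02.
rewrite -e01 -e12 -e02 -(mk_comp (step_gle (sP 0 1 erefl)) (step_gle (sP 1 2 erefl))).
rewrite fm_comp //.
change (gcod (mk (P 0) (P 1)) = gdom (mk (P 1) (P 2))).
by rewrite gcod_mk ?gdom_mk //; [exact: step_gle (sP 1 2 erefl)|exact: step_gle (sP 0 1 erefl)].
Qed.



Lemma P4 j k u b c d : j != k -> step j u b -> step k u c -> step k b d -> step j c d ->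
  Defs.comp (E k b d) (E j u b) = Defs.comp (E j c d) (E k u c).
Proof.
move=> hjk sub suc sbd scd.
have hud : gle u d := gle_trans (step_gle sub) (step_gle sbd).
have /gleP hud' := hud.
pose f := tp (e2 j k) u d.
pose Q x y := ptv (e2 j k) (fun l => x * ((l : nat) == j) + y * ((l : nat) == k)).
have Qv : forall x y l, x <= 1 -> y <= 1 ->
    (Q x y l : nat) = x * ((l : nat) == j) + y * ((l : nat) == k).
  move=> x y l hx hy; rewrite ptv_val // /e2; apply: leq_add.
    by case: (_ == j); rewrite ?muln1 ?muln0.
  by case: (_ == k); rewrite ?muln1 ?muln0.
have fQ : forall x y, x <= 1 -> y <= 1 -> forall l, (gfo f (Q x y) l : nat) =
    if x * ((l : nat) == j) + y * ((l : nat) == k) == 0 then u l else d l.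
  move=> x y hx hy l; rewrite /gfo /= /tpf Qv //; case: eqP => // _.
  by rewrite omax_r.
have f00 : gfo f (Q 0 0) = u by apply: gob_ext => l; rewrite fQ.
have f10 : gfo f (Q 1 0) = b.
  apply: gob_ext => l; rewrite fQ // mul1n mul0n addn0.
  case: (eqVneq (l : nat) j) => [e|ne] /=; last by rewrite (sub.2 l ne).
  by rewrite (sbd.2 l) // e.
have f01 : gfo f (Q 0 1) = c.
  apply: gob_ext => l; rewrite fQ // mul1n mul0n add0n.
  case: (eqVneq (l : nat) k) => [e|ne] /=; last by rewrite (suc.2 l ne).
  by rewrite (scd.2 l) // e eq_sym.
have f11 : gfo f (Q 1 1) = d.
  apply: gob_ext => l; rewrite fQ // !mul1n.
  case: (eqVneq (l : nat) j) => [e|nj] //=.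
  case: (eqVneq (l : nat) k) => [e|nk] //=.
  by rewrite (sub.2 l nj) (sbd.2 l nk).
have sj : forall y, y <= 1 -> step j (Q 0 y) (Q 1 y).
  move=> y hy; split.
    by apply/gleP => l; rewrite !Qv // mul0n add0n mul1n leq_addl.
  by move=> l hl; apply: val_inj; rewrite /= !Qv // (negbTE hl) !muln0.
have sk : forall x, x <= 1 -> step k (Q x 0) (Q x 1).
  move=> x hx; split.
    by apply/gleP => l; rewrite !Qv // mul0n addn0 mul1n leq_addr.
  by move=> l hl; apply: val_inj; rewrite /= !Qv // (negbTE hl) !muln0.
have e1 := Efm_mk f (he2 j k) (sj 0 erefl).
have e2 := Efm_mk f (he2 j k) (sk 1 erefl).
have e3 := Efm_mk f (he2 j k) (sk 0 erefl).
have e4 := Efm_mk f (he2 j k) (sj 1 erefl).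
rewrite f00 f10 f01 f11 in e1 e2 e3 e4.
rewrite -e1 -e2 -e3 -e4.
rewrite -(fm_mk_comp _ (step_gle (sj 0 erefl)) (step_gle (sk 1 erefl))).
by rewrite -(fm_mk_comp _ (step_gle (sk 0 erefl)) (step_gle (sj 1 erefl))).
Qed.

Local Notation G := (Gen O E).

Lemma catl : is_cat C. Proof. by case: hC. Qed.

Lemma Gdc a b j : gle a b -> dom (G a b j) = O a /\ cod (G a b j) = O (mid a b j).
Proof.
have [cid [ccomp _]] := catl.
move=> hab; elim: j => [|j [IHd IHc]] /=; first by rewrite mid0; exact: cid.
have hc : cod (G a b j) = dom (E j (mid a b j) (mid a b j.+1)) by rewrite Pdom.
have [d1 c1] := ccomp _ _ hc.
by rewrite d1 c1 IHd Pcod //; exact: mid_step.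
Qed.

Lemma StepL k x x' c : k < N -> step k x x' -> gle x' c ->
  Defs.comp (G x' c N) (E k x x') = G x c N.
Proof.
have [cid [ccomp [cunit cassoc]]] := catl.
move=> hk sxx hx'c; have hxc := gle_trans (step_gle sxx) hx'c.
have sm : forall i, i <= k -> step k (mid x c i) (mid x' c i).
  move=> i hi; case: sxx => /gleP h1 h2; split.
    by apply/gleP => l; rewrite /mid; case: ifP.
  by move=> l hl; rewrite /mid; case: ifP => // _; rewrite h2.
have dG := fun a b j h => proj1 (@Gdc a b j h).
have cG := fun a b j h => proj2 (@Gdc a b j h).
have A : forall j, j <= k -> Defs.comp (G x' c j) (E k x x') =
    Defs.comp (E k (mid x c j) (mid x' c j)) (G x c j).
  elim => [_|j IH hj] /=.
    rewrite !mid0 -{1}(Pcod sxx) -(Pdom k x x').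
    by rewrite (cunit _).1 (cunit _).2.
  have hj' : j <= k := ltnW hj.
  have s1 := mid_step j hxc; have s2 := mid_step j hx'c.
  have s3 := sm j hj'; have s4 := sm j.+1 hj.
  rewrite -cassoc; first last.
  - by rewrite Pdom cG.
  - by rewrite (Pcod sxx) dG.
  rewrite IH // cassoc; first last.
  - by rewrite (Pcod s3) Pdom.
  - by rewrite cG // Pdom.
  have hne : j != k by rewrite neq_ltn hj.
  rewrite -(P4 hne s1 s3 s4 s2) -cassoc //.
  - by rewrite cG // Pdom.
  - by rewrite (Pcod s1) Pdom.
have B : Defs.comp (G x' c k.+1) (E k x x') = G x c k.+1.
  rewrite /= -cassoc; first last.
  - by rewrite Pdom cG.
  - by rewrite (Pcod sxx) dG.
  have s3 := sm k (leqnn k); have s2 := mid_step k hx'c.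
  have emid : mid x' c k.+1 = mid x c k.+1.
    apply: gob_ext => l; rewrite /mid; case: ifP => // hl.
    case: sxx => _ h2; rewrite h2 //; by apply/eqP => e; move: hl; rewrite e ltnSn.
  rewrite A // cassoc; first last.
  - by rewrite (Pcod s3) Pdom.
  - by rewrite cG // Pdom.
  by rewrite (P3 s3 s2) emid.
have Cc : forall i, Defs.comp (G x' c (k.+1 + i)) (E k x x') = G x c (k.+1 + i).
  elim => [|i IH]; first by rewrite addn0 B.
  rewrite addnS !(GenS _ _ _ _ (k.+1 + i)) -cassoc; first last.
  - by rewrite Pdom cG.
  - by rewrite (Pcod sxx) dG.
  have emid : forall j, k < j -> mid x' c j = mid x c j.
    move=> j hj; apply: gob_ext => l; rewrite /mid; case: ifP => // hl.
    case: sxx => _ h2; rewrite h2 //; by apply/eqP => e; move: hl; rewrite e hj.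
  by rewrite IH !emid //; lia.
by rewrite -(subnKC hk) Cc.
Qed.

Lemma Fun a b c : gle a b -> gle b c ->
  Defs.comp (G b c N) (G a b N) = G a c N.
Proof.
have [cid [ccomp [cunit cassoc]]] := catl.
move=> hab hbc; have hac := gle_trans hab hbc.
suff H : forall j, j <= N -> Defs.comp (G (mid a b j) c N) (G a b j) = G a c N.
  by have := H N (leqnn _); rewrite midN.
elim => [_|j IH hj].
  change (Gen O E a b 0) with (idm (O a)).
  by rewrite mid0 -(proj1 (Gdc N hac)) (cunit _).1.
rewrite (GenS _ _ a b j).
have s1 := mid_step j hab.
have h1 : gle (mid a b j.+1) c := gle_trans (mid_ge _ hab) hbc.
rewrite cassoc; first last.
- by rewrite (Pcod s1) (proj1 (Gdc _ h1)).
- by rewrite (proj2 (Gdc _ hab)) Pdom.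
by rewrite StepL // IH // ltnW.
Qed.

Lemma Gid a j : G a a j = idm (O a).
Proof.
have [cid [ccomp [cunit cassoc]]] := catl.
elim: j => [|j IH] //=.
have e : forall i, mid a a i = a by move=> i; apply: functional_extensionality_dep => l; rewrite /mid; case: ifP.
rewrite !e IH P0; have := (cunit (idm (O a))).1; by rewrite (cid (O a)).1.
Qed.

Lemma Gsub (P : mor C -> Prop) : is_subcat P -> forall a b, gle a b ->
  (forall j, P (E j (mid a b j) (mid a b j.+1))) -> forall j, P (G a b j).
Proof.
move=> [h1 h2] a b hab hE; elim => [|j IH] /=; first exact: h1.
apply: h2 => //; by rewrite (proj2 (Gdc _ hab)) Pdom.
Qed.

Lemma mid_const (a b : gob p) j : gle a b -> (forall l : 'I_N, (l : nat) = j -> (a l : nat) = b l) ->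
  mid a b j = mid a b j.+1.
Proof.
move=> _ h; apply: gob_ext => l; rewrite /mid.
case: (eqVneq (l : nat) j) => [e|ne].
  by rewrite e ltnn ltnSn h.
have e : (l < j.+1) = (l < j) by rewrite ltnS leq_eqVlt (negbTE ne).
by rewrite e.
Qed.

Definition glue_fm (m : gmor p) : mor C := G (gdom m) (gcod m) N.

Lemma glue_dom m : dom (glue_fm m) = O (gdom m).
Proof. exact: (proj1 (Gdc N (svalP m))). Qed.
Lemma glue_cod m : cod (glue_fm m) = O (gcod m).
Proof. by rewrite /glue_fm (proj2 (Gdc N (svalP m))) midN. Qed.
Lemma glue_id a : glue_fm (gid a) = idm (O a).
Proof. exact: Gid. Qed.
Lemma glue_comp (f g : gmor p) : gcod f = gdom g ->
  glue_fm (gcomp g f) = Defs.comp (glue_fm g) (glue_fm f).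
Proof.
move=> e; have hf := svalP f; have hg := svalP g.
have e1 : gdom (gcomp g f) = gdom f by rewrite /gdom (gcomp_val e).
have e2 : gcod (gcomp g f) = gcod g by rewrite /gcod (gcomp_val e).
have hg' : gle (gcod f) (gcod g) by rewrite e.
by rewrite /glue_fm e1 e2 -(@Fun (gdom f) (gcod f) (gcod g) hf hg') e.
Qed.

Lemma glue_v i m : gv i m -> rv i (glue_fm m).
Proof.
have [_ [hv [hw [hwv _]]]] := hC.
move=> hm; apply: (Gsub (hv i) (svalP m)) => j.
case: (eqVneq j 0) => [->|j0].
  apply: hwv; rewrite /E; apply: fm_w => k hk /=; rewrite /ek.
  by case: eqP => // e; case/eqP: hk; apply: val_inj.
case: (eqVneq j i.+1) => [->|ji].
  rewrite /E; apply: fm_v => k hk hk' /=; rewrite /ek.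
  by case: eqP => // e; case/eqP: hk'; apply: val_inj; rewrite /= e.
rewrite (@mid_const _ _ j (svalP m)) ?P0; first exact: (hv i).1.
move=> l e; apply: hm; apply/eqP => e'; subst j.
  by move: j0; rewrite e'.
by move/negP: ji; apply; rewrite e' lift0.
Qed.

Lemma glue_w m : gw m -> rw (glue_fm m).
Proof.
have [_ [hv [hw [hwv _]]]] := hC.
move=> hm; apply: (Gsub hw (svalP m)) => j.
case: (eqVneq j 0) => [->|j0].
  rewrite /E; apply: fm_w => k hk /=; rewrite /ek.
  by case: eqP => // e; case/eqP: hk; apply: val_inj.
rewrite (@mid_const _ _ j (svalP m)) ?P0; first exact: hw.1.
move=> l e; apply: hm; apply/eqP => e'; subst j.
by move: j0; rewrite e'.
Qed.

Definition glue : rfun (grid p) C :=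
  @RFun n (grid p) C O glue_fm glue_dom glue_cod glue_id glue_comp glue_v glue_w.

Lemma Gen_map r (f : mmono n r p) hr (a b : gob r) : gle a b -> forall j,
  Gen (fo (Phi f hr)) (fun j u v => fm (Phi f hr) (mk u v)) a b j = G (gfo f a) (gfo f b) j.
Proof.
move=> hab; elim=> [|j IH]; first by rewrite /= Ofo.
by rewrite !GenS IH (Efm_mk _ _ (mid_step j hab)) !gfo_mid.
Qed.

Lemma glue_ext r (f : mmono n r p) hr : rfeq (rcomp glue (gridfun f)) (Phi f hr).
Proof.
split=> [c|m]; first by rewrite /= Ofo.
change (G (gfo f (gdom m)) (gfo f (gcod m)) N = fm (Phi f hr) m).
have hm : gle (gdom m) (gcod m) := svalP m.
by rewrite [in RHS](mkE m) (Decomp _ hm) Gen_map.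
Qed.

End Glue.

Lemma GU (D : prerelcat n) q (F1 F2 : rfun (grid q) D) :
  (forall r (k : mmono n r q), tdim r <= 2 ->
     rfeq (rcomp F1 (gridfun k)) (rcomp F2 (gridfun k))) -> rfeq F1 F2.
Proof.
move=> H.
have ho : forall c, fo F1 c = fo F2 c.
  move=> c; rewrite -(gfo_bot z0 c c); exact: (H _ _ hz0).1 (bot z0).
split=> // m.
have hm : gle (gdom m) (gcod m) := svalP m.
rewrite (mkE m) !(Decomp _ hm); apply: Gen_ext => // j.
rewrite (step_mor (mid_step j hm)).
exact: (H _ _ (hek j)).2 (topm (ek j)).
Qed.

Lemma gridfun_comp r q p (f : mmono n q p) (k : mmono n r q) :
  rfeq (rcomp (gridfun f) (gridfun k)) (gridfun (mm_comp f k)).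
Proof. by split=> // m; apply: gm_eq. Qed.

Section Ext.
Variables (X : pmss n) (hX : is_mss X) (C : prerelcat n) (hC : is_relcat C)
  (T : spred (nerve C)) (h : smap (sk2 X) T).

Lemma sk2_low r (x : X r) : tdim r <= 2 -> sk2 X r x.
Proof. by move=> hr; exists r, (mm_id r), x; split=> //; rewrite hX.1. Qed.

Lemma sfun_irr p (x1 x2 : X p) (e : x1 = x2) (h1 : sk2 X p x1) (h2 : sk2 X p x2) :
  sfun h h1 = sfun h h2.
Proof. by subst; rewrite (proof_irrelevance _ h1 h2). Qed.

Definition PhiX p (y : X p) r (f : mmono n r p) (hr : tdim r <= 2) : rfun (grid r) C :=
  sfun h (sk2_low (act f y) hr).

Lemma PhiX_nat p (y : X p) r r' (f : mmono n r p) (g : mmono n r' r) hr hr' :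
  rfeq (PhiX y (mm_comp f g) hr') (rcomp (PhiX y f hr) (gridfun g)).
Proof.
rewrite /PhiX (sfun_irr (hX.2 _ _ _ f g y) _ (sk2_low (act g (act f y)) hr')).
by rewrite (@sfun_nat _ _ _ _ _ h _ _ g _ (sk2_low (act f y) hr)).
Qed.

Definition extf p (y : X p) : rfun (grid p) C := glue hC (@PhiX_nat p y).

Lemma ext_agree p (y : X p) r (f : mmono n r p) hr :
  rfeq (rcomp (extf y) (gridfun f)) (PhiX y f hr).
Proof. exact: glue_ext. Qed.

Lemma extf_nat p q (f : mmono n q p) (y : X p) : extf (act f y) = rcomp (extf y) (gridfun f).
Proof.
apply: rfeq_eq; apply: GU => r k hr.
apply: rfeq_trans (ext_agree _ k hr) _.
apply: rfeq_sym; apply: rfeq_trans (rcompA _ _ _) _.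
apply: rfeq_trans (rfeq_compl _ (gridfun_comp f k)) _.
apply: rfeq_trans (ext_agree y (mm_comp f k) hr) _.
by rewrite /PhiX (sfun_irr (hX.2 _ _ _ f k y) _ (sk2_low _ hr)).
Qed.

Definition ext : smap (allp X) (allp (nerve C)) :=
  @SMap n X (allp X) (nerve C) (allp (nerve C)) (fun p y _ => extf y)
    (fun _ _ _ => I) (fun p q f y _ _ => extf_nat f y).

Lemma ext_on_sk2 p (y : X p) (hy : sk2 X p y) : rfeq (extf y) (sfun h hy).
Proof.
apply: GU => r k hr; apply: rfeq_trans (ext_agree y k hr) _.
by rewrite /PhiX (@sfun_nat _ _ _ _ _ h _ _ k _ hy).
Qed.
End Ext.

End Work.

Theorem mainTheorem3 (n : nat) (hn : 1 <= n) :
  (forall X : pmss n, is_mss X ->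
   forall (KX : prerelcat n) (eta : smap (allp X) (allp (nerve KX))),
     is_relcat KX -> universal eta ->
   forall (KS : prerelcat n) (eta' : smap (sk2 X) (allp (nerve KS))),
     is_relcat KS -> universal eta' ->
   forall phi : rfun KS KX, factors phi eta' (restr_dom eta) ->
     is_iso phi) /\
  (forall C : prerelcat n, is_relcat C ->
   forall Y : pmss n, is_mss Y ->
     bijective (@restr n Y (nerve C))).
Proof.
split.
- move=> X hX KX eta hKX ueta KS eta' hKS ueta' phi hphi.
  pose g' := ext hX hKS eta'.
  have [[psi hpsi] _] := ueta KS hKS g'.
  exists psi; split.
  + apply: (ueta' KS hKS eta').2 => [p x hx|p x hx]; last by split.
    apply: rfeq_trans (rcompA _ _ _) _.
    apply: rfeq_trans (rfeq_compl _ (hphi p x hx)) _.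
    apply: rfeq_trans (hpsi p x I) _.
    exact: ext_on_sk2.
  + apply: (ueta KX hKX eta).2 => [p x hx|p x hx]; last by split.
    apply: rfeq_trans (rcompA _ _ _) _.
    apply: rfeq_trans (rfeq_compl _ (hpsi p x hx)) _.
    apply: GU => r k hr.
    apply: rfeq_trans (rcompA _ _ _) _.
    have e : rcomp (sfun g' hx) (gridfun k) = sfun g' (I : allp X r (act k x)).
      by rewrite (@sfun_nat _ _ _ _ _ g' _ _ k x hx I).
    rewrite e.
    apply: rfeq_trans (rfeq_compl _ (ext_on_sk2 hX hKS eta' (sk2_low hX (act k x) hr))) _.
    apply: rfeq_trans (hphi _ _ _) _.
    have e2 : sfun eta (I : allp X r (act k x)) = rcomp (sfun eta hx) (gridfun k).
      exact: (@sfun_nat _ _ _ _ _ eta _ _ k x hx I).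
    change (rfeq (sfun eta (I : allp X r (act k x))) (rcomp (sfun eta hx) (gridfun k))).
    by rewrite e2.
- move=> C hC Y hY.
  exists (fun h => ext hY hC h).
  + move=> g; apply: smap_eq => p y hy.
    change (extf hY hC (restr g) y = sfun g hy).
    apply: rfeq_eq; apply: GU => r k hr.
    apply: rfeq_trans (ext_agree hY hC (restr g) y k hr) _.
    rewrite /PhiX.
    change (rfeq (sfun g (I : allp Y r (act k y))) (rcomp (sfun g hy) (gridfun k))).
    by rewrite (@sfun_nat _ _ _ _ _ g _ _ k y hy I).
  + move=> h; apply: smap_eq => p y hy.
    change (extf hY hC h y = sfun h hy).
    apply: rfeq_eq; exact: ext_on_sk2.
Qed.
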